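(* For every integer $k$ with $1\le k\le p$, the mechanism $RC_k$ subgame perfect implements the supermajority rule $Maj_k$: for every preference profile $R$, every subgame-perfect equilibrium yields the outcome $Maj_k(R)$, and some subgame-perfect equilibrium yields $Maj_k(R)$.
   Context: Agents $I=\{1,\dots,n\}$, $n=2p+1$, with complete information; options $A=\{sq,x\}$ (status quo and alternative); strict preferences over $A$; lotteries compared by stochastic dominance (an agent preferring $y$ weakly (strictly) prefers $\beta$ to $\eta$ iff $\beta(y)\ge\eta(y)$ ($>$)). Supermajority rule: $Maj_k(R)=x$ if $|\{i: x\,R_i\,sq\}|\ge p+k$, and $Maj_k(R)=sq$ otherwise. Mechanism $RC_k$: Voting stage: each agent simultaneously votes $v_i\in A$; the profile $v$ and the winner are announced, the winner being $x$ if at least $p+k$ agents vote $x$ and $sq$ otherwise. Confirmation stage: let $\bar t=p+k$ if $sq$ is the Voting-stage winner and $\bar t=p+2-k$ otherwise; $\bar t$ agents are drawn uniformly at random and ordered uniformly, $\pi_1,\dots,\pi_{\bar t}$; sequentially, as long as nobody has announced $Y$, agent $\pi_t$ announces $Y$ or $N$. If some agent announces $Y$ the outcome is the Voting-stage winner; if all announce $N$, the outcome is the lottery assigning to each option its share of Voting-stage votes ($|\{i:v_i=y\}|/n$ for $y\in A$). *)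

(* Defs.v *)
(* Probabilities are rationals (all probabilities in the
   mechanism RC_k are rational). *)
From HB Require Import structures.
From mathcomp Require Import all_boot all_order all_algebra.
Set Implicit Arguments. Unset Strict Implicit. Unset Printing Implicit Defensive.
Import Order.TTheory GRing.Theory Num.Theory.
Local Open Scope ring_scope.

Inductive opt := SQ | X.
Definition opt_eqb (a b : opt) : bool :=
  match a, b with SQ, SQ | X, X => true | _, _ => false end.
Lemma opt_eqP : Equality.axiom opt_eqb.
Proof. by case; case; constructor. Qed.
HB.instance Definition _ := hasDecEq.Build opt opt_eqP.

(* Agents I = {1,...,n}, n = 2p+1 (here indexed 0..2p). *)
Definition agent (p : nat) := 'I_((2 * p).+1).

(* A strict preference over the two options is determined by the top option:
   R i = the option agent i strictly prefers. *)
Definition profile (p : nat) := agent p -> opt.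

Definition lottery := opt -> rat.
Definition dirac (y : opt) : lottery := fun z => if z == y then 1 else 0.

(* Stochastic dominance: an agent preferring [top] strictly prefers b to e
   iff b(top) > e(top). *)
Definition sprefers (top : opt) (b e : lottery) : Prop := e top < b top.

Definition Maj (p k : nat) (R : profile p) : opt :=
  if (p + k <= #|[set i | R i == X]|)%N then X else SQ.

Definition votes (p : nat) := {ffun agent p -> opt}.

Definition vwinner (p k : nat) (v : votes p) : opt :=
  if (p + k <= #|[set i | v i == X]|)%N then X else SQ.

(* number of agents drawn in the confirmation stage *)
Definition tbar (p k : nat) (v : votes p) : nat :=
  if vwinner k v == SQ then (p + k)%N else (p + 2 - k)%N.

Definition vshare (p : nat) (v : votes p) : lottery :=
  fun y => (#|[set i | v i == y]|)%:R / ((2 * p).+1)%:R.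

(* A (pure) strategy: a vote, and for each confirmation-stage history
   (announced vote profile v, drawn ordered sequence pi, position t at which
   all previous drawn agents announced N) an announcement (true = Y, false = N). *)
Record strategy (p : nat) := Strategy {
  vote : opt;
  confirm : votes p -> seq (agent p) -> nat -> bool }.

Definition sprofile (p : nat) := agent p -> strategy p.

Definition votes_of (p : nat) (s : sprofile p) : votes p :=
  [ffun i => vote (s i)].

(* Play of the confirmation stage from position t (the remaining drawn
   agents are [rest]), all previous drawn agents having announced N. *)
Fixpoint conf_run (p k : nat) (s : sprofile p) (v : votes p)
    (pi : seq (agent p)) (t : nat) (rest : seq (agent p)) : lottery :=
  match rest with
  | [::] => vshare v
  | i :: rest' =>
      if confirm (s i) v pi t then dirac (vwinner k v)
      else conf_run k s v pi t.+1 rest'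
  end.

Definition node_out (p k : nat) (s : sprofile p) (v : votes p)
    (pi : seq (agent p)) (t : nat) : lottery :=
  conf_run k s v pi t (drop t pi).

Definition chance_out (p k : nat) (s : sprofile p) (v : votes p) : lottery :=
  fun y =>
    (\sum_(pi : (tbar k v).-tuple (agent p) | uniq pi) node_out k s v pi 0 y)
    / (#|[set pi : (tbar k v).-tuple (agent p) | uniq pi]|)%:R.

Definition game_out (p k : nat) (s : sprofile p) : lottery :=
  chance_out k s (votes_of s).

Definition deviate (p : nat) (s : sprofile p) (i : agent p) (si : strategy p)
  : sprofile p := fun j => if j == i then si else s j.

(* Subgame-perfect equilibrium of RC_k at profile R: in every subgame (the
   whole game, every chance node after the Voting stage, every decision node
   of the Confirmation stage), no agent has a deviation yielding a lottery he
   strictly prefers (stochastic dominance). *)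
Definition SPE (p k : nat) (R : profile p) (s : sprofile p) : Prop :=
  (forall i si, ~ sprefers (R i) (game_out k (deviate s i si)) (game_out k s))
  /\ (forall (v : votes p) i si,
        ~ sprefers (R i) (chance_out k (deviate s i si) v) (chance_out k s v))
  /\ (forall (v : votes p) (pi : (tbar k v).-tuple (agent p)), uniq pi ->
      forall t, (t < tbar k v)%N -> forall i si,
        ~ sprefers (R i) (node_out k (deviate s i si) v pi t)
                         (node_out k s v pi t)).

(* Main.v *)
Require Import Defs.
From HB Require Import structures.
From mathcomp Require Import all_boot all_order all_algebra.
From mathcomp Require Import zify ring lra.
Set Implicit Arguments. Unset Strict Implicit. Unset Printing Implicit Defensive.
Import Order.TTheory GRing.Theory Num.Theory.
Local Open Scope ring_scope.

Section Aux.
Variables (p k : nat).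
Implicit Types (v : votes p) (R : profile p).

Lemma card_agent : #|agent p| = (2 * p).+1.
Proof. by rewrite card_ord. Qed.

Lemma cards_opt (f : agent p -> opt) (y : opt) :
  (#|[set j | f j != y]| + #|[set j | f j == y]|)%N = (2 * p).+1.
Proof.
transitivity #|agent p|; last exact: card_agent.
rewrite -(cardsC [set j | f j != y]); congr (_ + _)%N.
by apply: eq_card => j; rewrite !inE negbK.
Qed.

Lemma set_neq_opt (f : agent p -> opt) (y : opt) :
  [set j | f j != y] = [set j | f j == (if y is X then SQ else X)].
Proof. by apply/setP => j; rewrite !inE; case: (f j); case: y. Qed.

Lemma vshare_ge0 v y : 0 <= vshare v y.
Proof. by rewrite /vshare divr_ge0 ?ler0n. Qed.

Lemma vshare_le1 v y : vshare v y <= 1.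
Proof.
rewrite /vshare ler_pdivrMr ?ltr0n // mul1r ler_nat.
apply: leq_trans (max_card _) _; by rewrite card_agent.
Qed.

Lemma vshare_sum v : vshare v SQ + vshare v X = 1.
Proof.
rewrite /vshare -mulrDl -natrD.
have -> : (#|[set i | v i == SQ]| + #|[set i | v i == X]|)%N = (2 * p).+1.
  by rewrite -(set_neq_opt v X); exact: cards_opt.
by rewrite divff // pnatr_eq0.
Qed.

Lemma dirac_ge0 w y : 0 <= dirac w y.
Proof. by rewrite /dirac; case: ifP. Qed.
Lemma dirac_le1 w y : dirac w y <= 1.
Proof. by rewrite /dirac; case: ifP. Qed.

Lemma vshare_dirac1 v w y : 1 <= vshare v w -> vshare v y = dirac w y.
Proof.
have := vshare_sum v; have := vshare_ge0 v SQ; have := vshare_ge0 v X.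
by case: w; case: y; rewrite /dirac /= => *; lra.
Qed.

Lemma vshare_dirac0 v w y' y : y' != w -> vshare v y' <= 0 ->
  vshare v y = dirac w y.
Proof.
have := vshare_sum v; have := vshare_ge0 v SQ; have := vshare_ge0 v X.
by case: w; case: y; case: y'; rewrite /dirac /= => *; lra.
Qed.

Lemma vshare_lt1 v i y : v i != y -> vshare v y < 1.
Proof.
move=> Hi; rewrite /vshare ltr_pdivrMr ?ltr0n // mul1r ltr_nat.
apply: leq_trans (_ : _ <= #|agent p|)%N _; last by rewrite card_agent.
apply: proper_card; apply/properP; split; first by apply/subsetP.
by exists i => //; rewrite inE.
Qed.

Lemma vshare_lt v v' y : (#|[set i | v i == y]| < #|[set i | v' i == y]|)%N ->
  vshare v y < vshare v' y.
Proof. by move=> H; rewrite /vshare ltr_pM2r ?invr_gt0 ?ltr0n // ltr_nat. Qed.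

Lemma exists_tuple (S : {set agent p}) tb : (tb <= #|S|)%N ->
  exists pi : tb.-tuple (agent p), uniq pi && all (fun j => j \in S) pi.
Proof.
move=> H.
have Hs : size (take tb (enum S)) == tb by rewrite size_takel // -cardE.
exists (Tuple Hs) => /=; rewrite take_uniq ?enum_uniq //=.
by apply/allP => j /mem_take; rewrite mem_enum.
Qed.

Lemma pigeon (S : {set agent p}) (pi : seq (agent p)) : uniq pi ->
  all (fun j => j \in S) pi -> (size pi <= #|S|)%N.
Proof.
move=> Hu Ha; rewrite -(card_uniqP Hu); apply: subset_leq_card.
by apply/subsetP => j Hj; exact: (allP Ha j Hj).
Qed.

Definition avg (tb : nat) (F : seq (agent p) -> rat) : rat :=
  (\sum_(pi : tb.-tuple (agent p) | uniq pi) F pi)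
    / (#|[set pi : tb.-tuple (agent p) | uniq pi]|)%:R.

Lemma Npos tb : (tb <= (2 * p).+1)%N ->
  (0 < #|[set pi : tb.-tuple (agent p) | uniq pi]|)%N.
Proof.
move=> H; have H' : (tb <= #|[set: agent p]|)%N by rewrite cardsT card_agent.
have [pi /andP[Hu _]] := exists_tuple H'.
by rewrite card_gt0; apply/set0Pn; exists pi; rewrite inE.
Qed.

Lemma sum_const_uniq tb (c : rat) :
  \sum_(pi : tb.-tuple (agent p) | uniq pi) c =
  c * (#|[set pi : tb.-tuple (agent p) | uniq pi]|)%:R.
Proof.
have -> : \sum_(pi : tb.-tuple (agent p) | uniq pi) c =
  \sum_(pi in [set pi : tb.-tuple (agent p) | uniq pi]) c.
  by apply: eq_bigl => pi; rewrite inE.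
by rewrite sumr_const mulr_natr.
Qed.

Lemma avg_const tb (F : seq (agent p) -> rat) (c : rat) : (0 < #|[set pi : tb.-tuple (agent p) | uniq pi]|)%N ->
  (forall pi : tb.-tuple (agent p), uniq pi -> F pi = c) -> avg tb F = c.
Proof.
move=> HN H; rewrite /avg (eq_bigr (fun _ => c)) // sum_const_uniq.
by rewrite -mulrA divff ?mulr1 // pnatr_eq0 -lt0n.
Qed.

Lemma avg_le tb (F : seq (agent p) -> rat) (c : rat) : (0 < #|[set pi : tb.-tuple (agent p) | uniq pi]|)%N ->
  (forall pi : tb.-tuple (agent p), uniq pi -> F pi <= c) -> avg tb F <= c.
Proof.
move=> HN H; rewrite /avg ler_pdivrMr ?ltr0n // -sum_const_uniq.
exact: ler_sum.
Qed.

Lemma avg_mono tb (F G : seq (agent p) -> rat) :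
  (forall pi : tb.-tuple (agent p), uniq pi -> F pi <= G pi) ->
  avg tb F <= avg tb G.
Proof.
move=> H; rewrite /avg ler_wpM2r ?invr_ge0 ?ler0n //; exact: ler_sum.
Qed.

Lemma avg_strict tb (F G : seq (agent p) -> rat) :
  (forall pi : tb.-tuple (agent p), uniq pi -> F pi <= G pi) ->
  (exists pi : tb.-tuple (agent p), uniq pi && (F pi < G pi)) ->
  avg tb F < avg tb G.
Proof.
move=> H [pi0 /andP[Hu Hlt]].
have HN : (0 < #|[set pi : tb.-tuple (agent p) | uniq pi]|)%N.
  by rewrite card_gt0; apply/set0Pn; exists pi0; rewrite inE.
rewrite /avg ltr_pM2r ?invr_gt0 ?ltr0n //.
rewrite (bigD1 pi0) //= [X in _ < X](bigD1 pi0) //=.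
apply: ltr_leD => //; apply: ler_sum => pi /andP[Hpi _]; exact: H.
Qed.

End Aux.

Section Game.
Variables (p k : nat) (R : profile p).
Implicit Types (v : votes p).
Hypotheses (hk1 : (1 <= k)%N) (hkp : (k <= p)%N).

Definition BI (v : votes p) (rest : seq (agent p)) : lottery :=
  if has (fun j => R j == vwinner k v) rest then dirac (vwinner k v) else vshare v.

Lemma BI_ge0 v rest y : 0 <= BI v rest y.
Proof. by rewrite /BI; case: ifP => _; [exact: dirac_ge0 | exact: vshare_ge0]. Qed.
Lemma BI_le1 v rest y : BI v rest y <= 1.
Proof. by rewrite /BI; case: ifP => _; [exact: dirac_le1 | exact: vshare_le1]. Qed.

Lemma conf_run_ext (s s' : sprofile p) v pi t rest :
  (forall j, j \in rest -> confirm (s' j) = confirm (s j)) ->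
  conf_run k s' v pi t rest = conf_run k s v pi t rest.
Proof.
elim: rest t => [|j rest IH] t H //=.
rewrite H ?mem_head // IH // => j' Hj'; apply: H; by rewrite inE Hj' orbT.
Qed.

Lemma tbar_le v : (tbar k v <= (2 * p).+1)%N.
Proof. rewrite /tbar; case: ifP => _; lia. Qed.

Lemma avg_ext tb (F G : seq (agent p) -> rat) :
  (forall pi : tb.-tuple (agent p), uniq pi -> F pi = G pi) -> avg tb F = avg tb G.
Proof. by move=> H; rewrite /avg (eq_bigr _ H). Qed.

Lemma nspref y (b e : lottery) : b y <= e y -> ~ sprefers y b e.
Proof. by rewrite /sprefers leNgt => /negP. Qed.
Lemma nsprefE y (b e : lottery) : ~ sprefers y b e -> b y <= e y.
Proof. by rewrite /sprefers leNgt => /negP. Qed.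

Lemma spe_node (s : sprofile p) : SPE k R s ->
  forall v (pi : seq (agent p)), uniq pi -> size pi = tbar k v ->
  forall t y, node_out k s v pi t y = BI v (drop t pi) y.
Proof.
move=> [_ [_ Hn]] v pi Hu Hsz.
suff H : forall d t, size pi = (t + d)%N -> forall y,
    node_out k s v pi t y = BI v (drop t pi) y.
  move=> t y; case: (leqP (size pi) t) => Ht.
    by rewrite /node_out drop_oversize.
  apply: (H (size pi - t)%N); lia.
elim=> [|d IH] t Hd y.
  by rewrite /node_out drop_oversize //; lia.
have Ht : (t < size pi)%N by lia.
have Hdrop := drop_nth (ord0 : agent p) Ht.
set i := nth ord0 pi t in Hdrop.
set w := vwinner k v.
have Hnotin : i \notin drop t.+1 pi.
  by have := drop_uniq t Hu; rewrite Hdrop /= => /andP[].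
have Hnode : forall s' : sprofile p, node_out k s' v pi t =
    if confirm (s' i) v pi t then dirac w else node_out k s' v pi t.+1.
  by move=> s'; rewrite /node_out Hdrop.
have IH' := IH t.+1 (etrans Hd (esym (addSnnS t d))).
have Hsz' : size pi == tbar k v by apply/eqP.
have Ht' : (t < tbar k v)%N by rewrite -Hsz.
have Hdev : forall b, node_out k (deviate s i (Strategy (vote (s i)) (fun _ _ _ => b))) v pi t =
    if b then dirac w else node_out k s v pi t.+1.
  move=> b; rewrite Hnode /deviate eqxx /=; case: b => //.
  rewrite /node_out; apply: conf_run_ext => j Hj.
  by case: eqP => // E; rewrite -E Hj in Hnotin.
have H1 := nsprefE (Hn v (Tuple Hsz') Hu t Ht' i (Strategy (vote (s i)) (fun _ _ _ => true))).
have H0 := nsprefE (Hn v (Tuple Hsz') Hu t Ht' i (Strategy (vote (s i)) (fun _ _ _ => false))).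
rewrite /= Hdev /= in H1; rewrite /= Hdev /= in H0.
rewrite Hnode Hdrop /BI /= -/w.
move: H1 H0; rewrite Hnode.
have IHi := IH' (R i); move: IHi.
rewrite /BI -/w.
case Hh: (has (fun j => R j == w) (drop t.+1 pi)); [rewrite orbT | rewrite orbF].
  case: (confirm (s i) v pi t) => /= _ _ _; first done.
  by rewrite IH' /BI -/w Hh.
case: (confirm (s i) v pi t) => /= IHi H1 H0.
  case: eqP => // Hne.
  symmetry; apply: (vshare_dirac0 (y' := R i)); first by apply/eqP.
  by rewrite IHi in H0; move: H0; rewrite /dirac; case: eqP.
rewrite IH' /BI -/w Hh; case: eqP => // Heq.
apply: vshare_dirac1.
by move: H1; rewrite IHi Heq /dirac eqxx.
Qed.


Definition s0 : sprofile p :=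
  fun j => Strategy (R j) (fun v (_ : seq (agent p)) (_ : nat) => R j == vwinner k v).

Lemma B_eq v pi t rest y : conf_run k s0 v pi t rest y = BI v rest y.
Proof.
elim: rest t => [|j rest IH] t //=.
rewrite /BI /=; case: eqP => //= _; rewrite IH /BI //.
Qed.

Lemma B_le i (s' : sprofile p) v pi t rest :
  (forall j, j != i -> s' j = s0 j) ->
  conf_run k s' v pi t rest (R i) <= BI v rest (R i).
Proof.
move=> Hs; elim: rest t => [|j rest IH] t /=; first by rewrite /BI /=.
rewrite /BI /=.
case: (eqVneq j i) => [->|Hji].
  case: (confirm (s' i) v pi t).
    case: eqP => [->|Hne] /=; first by [].
    rewrite /dirac; case: eqP => // _; case: ifP => _; [exact: dirac_ge0|exact: vshare_ge0].
  case: eqP => [Heq|Hne] /=.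
    by apply: le_trans (IH t.+1) _; rewrite Heq /dirac eqxx; exact: BI_le1.
  exact: IH.
rewrite Hs //=; case: eqP => //= _; exact: IH.
Qed.

Lemma A_dirac v w : vwinner k v = w ->
  (#|[set j | R j != w]| < tbar k v)%N ->
  forall y, avg (tbar k v) (fun pi => BI v pi y) = dirac w y.
Proof.
move=> Hw Hc y; apply: avg_const; first exact: Npos (tbar_le v).
move=> pi Hu; rewrite /BI Hw.
case Hh : (has (fun j => R j == w) pi) => //.
have : all (fun j => j \in [set j | R j != w]) pi.
  apply/allP => j Hj; rewrite inE; apply/negP => E.
  have : has (fun j => R j == w) pi by apply/hasP; exists j.
  by rewrite Hh.
move/(pigeon Hu); rewrite size_tuple => H.
by rewrite ltnNge H in Hc.
Qed.

Lemma strict_lt v v' w y : vwinner k v = w -> vwinner k v' = w ->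
  (tbar k v <= #|[set j | R j != w]|)%N ->
  (#|[set i | v i == y]| < #|[set i | v' i == y]|)%N ->
  avg (tbar k v) (fun pi => BI v pi y) < avg (tbar k v') (fun pi => BI v' pi y).
Proof.
move=> Hw Hw' Hc Hlt.
have -> : tbar k v' = tbar k v by rewrite /tbar Hw Hw'.
apply: avg_strict.
  move=> pi _; rewrite /BI Hw Hw'; case: ifP => _ //.
  exact/ltW/vshare_lt.
have [pi /andP[Hu Ha]] := exists_tuple Hc.
exists pi; rewrite Hu /BI Hw Hw' /=.
have -> : has (fun j => R j == w) pi = false.
  apply/negP => /hasP[j Hj Hr]; have := allP Ha j Hj; by rewrite inE Hr.
exact: vshare_lt.
Qed.

Lemma card_flip (v v' : votes p) i y : (forall j, j != i -> v' j = v j) ->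
  v i != y -> v' i == y ->
  (#|[set j | v j == y]| < #|[set j | v' j == y]|)%N.
Proof.
move=> Hs Hi Hi'; apply: proper_card; apply/properP; split.
  apply/subsetP => j; rewrite !inE => Hj.
  by rewrite Hs //; apply: contraTneq Hj => ->.
by exists i; rewrite inE.
Qed.

Lemma card_sub (v v' : votes p) y : (forall j, v j == y -> v' j == y) ->
  (#|[set j | v j == y]| <= #|[set j | v' j == y]|)%N.
Proof.
move=> H; apply: subset_leq_card; apply/subsetP => j; rewrite !inE; exact: H.
Qed.

End Game.

Section Main.
Variables (p k : nat) (R : profile p).
Hypotheses (hk1 : (1 <= k)%N) (hkp : (k <= p)%N).
Implicit Types (v : votes p).

Lemma co_dev (s s' : sprofile p) : SPE k R s ->
  (forall j, confirm (s' j) = confirm (s j)) ->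
  forall v y, chance_out k s' v y = avg (tbar k v) (fun pi => BI k R v pi y).
Proof.
move=> Hs Hc v y.
change (avg (tbar k v) (fun pi => node_out k s' v pi 0 y) = avg (tbar k v) (fun pi => BI k R v pi y)).
apply: avg_ext => pi Hu.
have E := spe_node hk1 hkp Hs Hu (size_tuple pi) 0 y; rewrite drop0 in E.
rewrite -E /node_out; congr (_ y); apply: conf_run_ext => j _; exact: Hc.
Qed.

Lemma BI_avg_le v y c : (dirac (vwinner k v) y <= c) -> (vshare v y <= c) ->
  avg (tbar k v) (fun pi => BI k R v pi y) <= c.
Proof.
move=> H1 H2; apply: avg_le; first exact: Npos (tbar_le hk1 hkp v).
by move=> pi _; rewrite /BI; case: ifP.
Qed.

Lemma main_spe (s : sprofile p) : SPE k R s ->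
  forall y, game_out k s y = dirac (Maj k R) y.
Proof.
move=> Hs; have [Hg _] := Hs.
set v := votes_of s.
have Hco := co_dev Hs (s' := s) (fun j => erefl).
set m := #|[set i | R i == X]|.
have HcX : (#|[set j | R j != X]| + m)%N = (2 * p).+1 := cards_opt R X.
have HcSQ : #|[set j | R j != SQ]| = m by rewrite (set_neq_opt R SQ).
have HnX : #|[set j | R j != X]| = ((2 * p).+1 - m)%N by move: HcX; lia.
have Hgame : forall i b, game_out k (deviate s i (Strategy b (confirm (s i)))) (R i)
    <= game_out k s (R i) := fun i b => nsprefE (Hg i _).
have Hdc : forall i b j, confirm (deviate s i (Strategy b (confirm (s i))) j) = confirm (s j).
  by move=> i b j; rewrite /deviate; case: eqP => // ->.
have Hvdev : forall i b j, votes_of (deviate s i (Strategy b (confirm (s i)))) j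
    = if j == i then b else v j.
  by move=> i b j; rewrite /votes_of !ffunE /deviate; case: eqP.
have Hgd : forall i b y, game_out k (deviate s i (Strategy b (confirm (s i)))) y =
    avg (tbar k (votes_of (deviate s i (Strategy b (confirm (s i))))))
      (fun pi => BI k R (votes_of (deviate s i (Strategy b (confirm (s i))))) pi y).
  by move=> i b y; rewrite /game_out (co_dev Hs (Hdc i b)).
move=> y; rewrite /game_out -/v Hco /Maj -/m.
case: (leqP (p + k) m) => Hm.
- case Hw: (vwinner k v); last first.
    by rewrite (A_dirac (R:=R) hk1 hkp Hw) // /tbar Hw /= HnX; lia.
  exfalso.
  have Hv : (#|[set j | v j == X]| < p + k)%N.
    by move: Hw; rewrite /vwinner; case: leqP.
  case/boolP: [exists i, (R i == X) && (v i != X)] => [/existsP[i /andP[Ri vi]] | Hno]; last first.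
    have : (m <= #|[set j | v j == X]|)%N.
      apply: subset_leq_card; apply/subsetP => j; rewrite !inE => Rj.
      by move/existsPn: Hno => /(_ j); rewrite Rj /= negbK.
    lia.
  set v' := votes_of (deviate s i (Strategy X (confirm (s i)))).
  have Hflip : (#|[set j | v j == X]| < #|[set j | v' j == X]|)%N.
    apply: (card_flip (i := i)) => //; last by rewrite /v' Hvdev eqxx.
    by move=> j Hj; rewrite /v' Hvdev (negbTE Hj).
  have Hg' := Hgame i X; rewrite (eqP Ri) Hgd -/v' in Hg'.
  case Hw': (vwinner k v').
  + have := strict_lt (R:=R) Hw Hw' _ Hflip; rewrite -Hco.
    have -> : (tbar k v <= #|[set j | R j != SQ]|)%N by rewrite HcSQ /tbar Hw /=.
    move=> /(_ isT) Hlt.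
    by move: Hg'; rewrite /game_out -/v leNgt Hlt.
  + rewrite (A_dirac (R:=R) hk1 hkp Hw') /dirac /= in Hg'; last by rewrite /tbar Hw' /= HnX; lia.
    move: Hg'; rewrite /game_out -/v Hco.
    have Hle := BI_avg_le (c := vshare v X) (v := v) (y := X).
    rewrite Hw /dirac /= vshare_ge0 lexx in Hle.
    have Hlt := vshare_lt1 vi.
    move=> H; have := le_trans H (Hle isT isT); by rewrite leNgt Hlt.
- case Hw: (vwinner k v).
    by rewrite (A_dirac (R:=R) hk1 hkp Hw) // /tbar Hw /= HcSQ.
  exfalso.
  have Hv : (p + k <= #|[set j | v j == X]|)%N.
    by move: Hw; rewrite /vwinner; case: leqP.
  case/boolP: [exists i, (R i == SQ) && (v i != SQ)] => [/existsP[i /andP[Ri vi]] | Hno]; last first.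
    have : (#|[set j | v j == X]| <= m)%N.
      apply: subset_leq_card; apply/subsetP => j; rewrite !inE => vj.
      move/existsPn: Hno => /(_ j); rewrite (eqP vj) /=.
      by case: (R j).
    lia.
  set v' := votes_of (deviate s i (Strategy SQ (confirm (s i)))).
  have Hflip : (#|[set j | v j == SQ]| < #|[set j | v' j == SQ]|)%N.
    apply: (card_flip (i := i)) => //; last by rewrite /v' Hvdev eqxx.
    by move=> j Hj; rewrite /v' Hvdev (negbTE Hj).
  have Hg' := Hgame i SQ; rewrite (eqP Ri) Hgd -/v' in Hg'.
  case Hw': (vwinner k v').
  + rewrite (A_dirac (R:=R) hk1 hkp Hw') /dirac /= in Hg'; last by rewrite /tbar Hw' /= HcSQ.
    move: Hg'; rewrite /game_out -/v Hco.
    have Hle := BI_avg_le (c := vshare v SQ) (v := v) (y := SQ).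
    rewrite Hw /dirac /= vshare_ge0 lexx in Hle.
    have Hlt := vshare_lt1 vi.
    move=> H; have := le_trans H (Hle isT isT); by rewrite leNgt Hlt.
  + have := strict_lt (R:=R) Hw Hw' _ Hflip; rewrite -Hco.
    have -> : (tbar k v <= #|[set j | R j != X]|)%N by rewrite /tbar Hw /= HnX; lia.
    move=> /(_ isT) Hlt.
    by move: Hg'; rewrite /game_out -/v leNgt Hlt.
Qed.


Lemma main_ex : SPE k R (s0 k R) /\ forall y, game_out k (s0 k R) y = dirac (Maj k R) y.
Proof.
set s := s0 k R.
set v0 := votes_of s.
have Hv0 : forall j, v0 j = R j by move=> j; rewrite /v0 /votes_of ffunE.
have co_le : forall (s' : sprofile p) i, (forall j, j != i -> s' j = s j) ->
    forall v, chance_out k s' v (R i) <= avg (tbar k v) (fun pi => BI k R v pi (R i)).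
  move=> s' i Hs v.
  change (avg (tbar k v) (fun pi => node_out k s' v pi 0 (R i)) <= avg (tbar k v) (fun pi => BI k R v pi (R i))).
  apply: avg_mono => pi _; rewrite /node_out drop0; exact: B_le.
have co_eq : forall v y, chance_out k s v y = avg (tbar k v) (fun pi => BI k R v pi y).
  move=> v y.
  change (avg (tbar k v) (fun pi => node_out k s v pi 0 y) = avg (tbar k v) (fun pi => BI k R v pi y)).
  apply: avg_ext => pi _; rewrite /node_out drop0; exact: B_eq.
set m := #|[set i | R i == X]|.
have HcX : (#|[set j | R j != X]| + m)%N = (2 * p).+1 := cards_opt R X.
have HcSQ : #|[set j | R j != SQ]| = m by rewrite (set_neq_opt R SQ).
have HnX : #|[set j | R j != X]| = ((2 * p).+1 - m)%N by move: HcX; lia.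
have Hw0 : vwinner k v0 = Maj k R.
  rewrite /vwinner /Maj.
  have -> : [set i | v0 i == X] = [set i | R i == X].
    by apply/setP => j; rewrite !inE Hv0.
  by [].
have Hdir : forall v, vwinner k v = Maj k R -> forall y,
    avg (tbar k v) (fun pi => BI k R v pi y) = dirac (Maj k R) y.
  move=> v Hw y; apply: (A_dirac (R:=R) hk1 hkp Hw).
  rewrite /tbar Hw /Maj -/m; case: (leqP (p + k) m) => Hm /=.
    by rewrite HnX; lia.
  by rewrite HcSQ; lia.
have Hout : forall y, game_out k s y = dirac (Maj k R) y.
  by move=> y; rewrite /game_out -/v0 co_eq; apply: Hdir.
split => //.
split; [|split].
- move=> i si; apply: nspref.
  set s' := deviate s i si.
  have Hs' : forall j, j != i -> s' j = s j by move=> j Hj; rewrite /s' /deviate (negbTE Hj).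
  set v' := votes_of s'.
  have Hv' : forall j, j != i -> v' j = R j.
    by move=> j Hj; rewrite /v' /votes_of ffunE Hs' //.
  rewrite Hout /game_out -/v'.
  apply: le_trans (co_le s' i Hs' v') _.
  case: (eqVneq (R i) (Maj k R)) => [E|Ne].
    rewrite E /dirac eqxx; apply: avg_le; first exact: Npos (tbar_le hk1 hkp v').
    by move=> *; exact: BI_le1.
  have Hw' : vwinner k v' = Maj k R.
    move: Ne; rewrite /vwinner /Maj -/m; case: (leqP (p + k) m) => Hm Ne.
      have : (m <= #|[set j | v' j == X]|)%N.
        apply: subset_leq_card; apply/subsetP => j; rewrite !inE => Rj.
        have Hji : j != i by apply: contraNneq Ne => <-; rewrite (eqP Rj).
        by rewrite Hv'.
      by move=> H; case: (leqP (p + k) #|[set j | v' j == X]|) => // H2; lia.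
    have : (#|[set j | v' j == X]| <= m)%N.
      apply: subset_leq_card; apply/subsetP => j; rewrite !inE => vj.
      case: (eqVneq j i) => [->|Hji]; last by rewrite -Hv'.
      by move: Ne; case: (R i).
    by move=> H; case: (leqP (p + k) #|[set j | v' j == X]|) => // H2; lia.
  by rewrite (Hdir v' Hw').
- move=> v i si; apply: nspref.
  rewrite co_eq; apply: co_le => j Hj; by rewrite /deviate (negbTE Hj).
- move=> v pi _ t _ i si; apply: nspref.
  rewrite /node_out B_eq; apply: B_le => j Hj; by rewrite /deviate (negbTE Hj).
Qed.

End Main.

Local Close Scope ring_scope.

Theorem proposition5 (p k : nat) (hk1 : (1 <= k)%N) (hkp : (k <= p)%N)
    (R : profile p) :
  (forall s : sprofile p, SPE k R s -> forall y, game_out k s y = dirac (Maj k R) y)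
  /\ (exists s : sprofile p, SPE k R s /\ forall y, game_out k s y = dirac (Maj k R) y).
Proof.
split; first exact: main_spe.
by exists (s0 k R); apply: main_ex.
Qed.
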